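(* Let $X$ be a real Banach space and $Y$ a linear subspace of $X$ with a norm $\|\cdot\|_Y$ such that $K:=U(Y)=\{g\in Y:\|g\|_Y\le1\}$ is a compact subset of $X$, and let $C_0$ be a constant with $\|g\|_X\le C_0\|g\|_Y$ for all $g\in Y$. Let $\lambda_1,\dots,\lambda_m\in X^*$ with $\|\lambda_j\|_{X^*}=1$, let $f\in K$ and $w:=\lambda(f)$, and assume $R(K_w)_X\neq0$. For $\mu>0$ define on $X$ the loss $$\mathcal{L}_\mu(g):=\|\lambda(g)-w\|+\mu\|g\|_Y .$$ Let $C>2$. Let $\mu>0$ and $\delta>0$ satisfy $\delta\le\mu^2$ and $$\varepsilon+2R(K(w,2\varepsilon))_X\le C\,R(K_w)_X,\qquad \varepsilon:=\mu\max(C_0,1+\mu),$$ (such $\mu$ exist, namely every sufficiently small $\mu>0$ satisfies this). Let $\Sigma\subset X$ satisfy $\operatorname{dist}(K,\Sigma\cap K)_X<\delta$, and let $\hat f\in\mathop{\rm argmin}_{g\in\Sigma}\mathcal{L}_\mu(g)$ be any minimizer. Then $$\|f-\hat f\|_X\le C\,R(K_w)_X .$$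
   Context: Convention: $\|g\|_Y:=\infty$ for $g\in X\setminus Y$. For $g\in X$, $\lambda(g):=(\lambda_1(g),\dots,\lambda_m(g))$; on $\mathbb{R}^m$, $\|v\|:=\big[\frac1m\sum_{j=1}^m|v_j|^2\big]^{1/2}$. For $A,B\subset X$, $\operatorname{dist}(A,B)_X:=\sup_{a\in A}\inf_{b\in B}\|a-b\|_X$. $K_w:=\{h\in K:\lambda(h)=w\}$, $K(w,\varepsilon):=\bigcup_{w'\in\mathbb{R}^m,\ \|w'-w\|\le\varepsilon}K_{w'}$. For $S\subset X$, $R(S)_X:=\inf\{r:\ S\subset B(z,r)_X\text{ for some }z\in X\}$ (Chebyshev radius), with $B(z,r)_X$ the ball of center $z$, radius $r$. *)

(* Defs.v *)
From HB Require Import structures.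
From mathcomp Require Import all_boot all_order all_algebra.
From mathcomp Require Import all_classical all_reals all_analysis.
Import Order.TTheory GRing.Theory Num.Theory.
Import numFieldNormedType.Exports.

Set Implicit Arguments.
Unset Strict Implicit.
Unset Printing Implicit Defensive.

Local Open Scope classical_set_scope.
Local Open Scope ring_scope.

Section Defs.
Context {R : realType} {X : normedModType R}.

Definition is_subspace (Y : set X) : Prop :=
  Y 0 /\ (forall (a : R) (x y : X), Y x -> Y y -> Y (a *: x + y)).

Definition is_norm_on (Y : set X) (nY : X -> R) : Prop :=
  (forall x, Y x -> 0 <= nY x) /\
  (forall x, Y x -> nY x = 0 -> x = 0) /\
  (forall (a : R) x, Y x -> nY (a *: x) = `|a| * nY x) /\
  (forall x y, Y x -> Y y -> nY (x + y) <= nY x + nY y).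

Definition unit_ball_Y (Y : set X) (nY : X -> R) : set X :=
  [set g | Y g /\ nY g <= 1].

Definition dual_norm (l : X -> R) : R :=
  sup [set `|l x| | x in [set x : X | `|x| <= 1]].

Definition vnorm (m : nat) (v : 'I_m -> R) : R :=
  Num.sqrt (m%:R^-1 * \sum_(j < m) `|v j| ^+ 2).

Definition Kw (m : nat) (K : set X) (lam : 'I_m -> X -> R) (w : 'I_m -> R)
  : set X := [set h | K h /\ forall j, lam j h = w j].

Definition Kweps (m : nat) (K : set X) (lam : 'I_m -> X -> R) (w : 'I_m -> R)
  (eps : R) : set X :=
  [set h | exists w' : 'I_m -> R,
     vnorm (fun j => w' j - w j) <= eps /\ Kw K lam w' h].

Definition cheb_rad (S : set X) : \bar R :=
  ereal_inf [set r%:E | r in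
    [set r : R | exists z : X, forall s, S s -> `|s - z| <= r]].

Definition hdist (A B : set X) : \bar R :=
  ereal_sup [set ereal_inf [set (`|a - b|)%:E | b in B] | a in A].

Definition normY (Y : set X) (nY : X -> R) (g : X) : \bar R :=
  if `[< Y g >] then (nY g)%:E else +oo%E.

Definition loss (m : nat) (Y : set X) (nY : X -> R) (lam : 'I_m -> X -> R)
  (w : 'I_m -> R) (mu : R) (g : X) : \bar R :=
  ((vnorm (fun j => lam j g - w j))%:E + mu%:E * normY Y nY g)%E.

End Defs.

(* Main.v *)
Require Import Defs.
From HB Require Import structures.
From mathcomp Require Import all_boot all_order all_algebra.
From mathcomp Require Import all_classical all_reals all_analysis.
From mathcomp Require Import ring lra.
Import Order.TTheory GRing.Theory Num.Theory.
Import numFieldNormedType.Exports.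
Local Open Scope classical_set_scope.
Local Open Scope ring_scope.

Section H.
Context {R : realType}.

Lemma vnorm_ge0 m (v : 'I_m -> R) : 0 <= vnorm v.
Proof. exact: sqrtr_ge0. Qed.

Lemma vnorm_le m (v : 'I_m -> R) b : (0 < m)%N -> 0 <= b ->
  (forall j, `|v j| <= b) -> vnorm v <= b.
Proof.
move=> m0 b0 hb; rewrite /vnorm.
have -> : b = Num.sqrt (b ^+ 2) by rewrite sqrtr_sqr ger0_norm.
rewrite ler_sqrt ?sqr_ge0 //.
have hm : (0 < m%:R :> R) by rewrite ltr0n.
rewrite ler_pdivrMl //.
apply: le_trans (_ : \sum_(j < m) b ^+ 2 <= _).
  apply: ler_sum => j _; rewrite lerXn2r ?nnegrE //; exact: hb.
by rewrite sumr_const card_ord mulr_natl.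
Qed.

Lemma sum_sq_eq0 m (u : 'I_m -> R) : \sum_(j < m) `|u j| ^+ 2 = 0 -> forall j, u j = 0.
Proof.
move=> h j.
have H : forall i : 'I_m, true -> 0 <= `|u i| ^+ 2 by move=> i _; exact: sqr_ge0.
have := psumr_eq0P H h (i := j) isT. by move/eqP; rewrite sqrf_eq0 normr_eq0 => /eqP.
Qed.

Lemma cs m (u v : 'I_m -> R) :
  \sum_(j < m) u j * v j <= Num.sqrt (\sum_(j < m) `|u j| ^+ 2) * Num.sqrt (\sum_(j < m) `|v j| ^+ 2).
Proof.
set P := \sum_(j < m) `|u j| ^+ 2; set Q := \sum_(j < m) `|v j| ^+ 2.
have P0 : 0 <= P by apply: sumr_ge0 => j _; exact: sqr_ge0.
have Q0 : 0 <= Q by apply: sumr_ge0 => j _; exact: sqr_ge0.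
have [a0|] := eqVneq (Num.sqrt P) 0.
  have /sum_sq_eq0 hu : P = 0 by move/eqP: a0; rewrite sqrtr_eq0 => h; apply/eqP; rewrite eq_le h P0.
  by rewrite big1 ?a0 ?mul0r // => j _; rewrite hu mul0r.
have [b0|] := eqVneq (Num.sqrt Q) 0.
  have /sum_sq_eq0 hu : Q = 0 by move/eqP: b0; rewrite sqrtr_eq0 => h; apply/eqP; rewrite eq_le h Q0.
  by rewrite big1 ?b0 ?mulr0 // => j _; rewrite hu mulr0.
move=> bn an.
set a := Num.sqrt P; set b := Num.sqrt Q.
have a0 : 0 < a by rewrite lt_neqAle eq_sym an sqrtr_ge0.
have b0 : 0 < b by rewrite lt_neqAle eq_sym bn sqrtr_ge0.
have aP : a ^+ 2 = P by rewrite sqr_sqrtr.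
have bQ : b ^+ 2 = Q by rewrite sqr_sqrtr.
have key : 2 * a * b * (\sum_(j < m) u j * v j) <= b ^+ 2 * P + a ^+ 2 * Q.
  rewrite mulr_sumr /P /Q !mulr_sumr -big_split /=.
  apply: ler_sum => j _.
  rewrite !real_normK ?num_real //.
  rewrite -subr_ge0 (_ : _ - _ = (b * u j - a * v j) ^+ 2) ?sqr_ge0 //; ring.
rewrite -aP -bQ in key.
set S := \sum_(j < m) _ in key *.
have ab0 : 0 < 2 * a * b by rewrite !mulr_gt0.
rewrite -(ler_pM2l ab0); apply: le_trans key _.
rewrite le_eqVlt; apply/orP; left; apply/eqP; ring.
Qed.

Lemma vnorm_tri m (u v : 'I_m -> R) :
  vnorm (fun j => u j + v j) <= vnorm u + vnorm v.
Proof.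
rewrite /vnorm.
have hm : 0 <= (m%:R : R)^-1 by rewrite invr_ge0 ler0n.
rewrite !sqrtrM // -mulrDr ler_wpM2l ?sqrtr_ge0 //.
set P := \sum_(j < m) `|u j| ^+ 2; set Q := \sum_(j < m) `|v j| ^+ 2.
have P0 : 0 <= P by apply: sumr_ge0 => j _; exact: sqr_ge0.
have Q0 : 0 <= Q by apply: sumr_ge0 => j _; exact: sqr_ge0.
have hc := cs _ u v.
have e : \sum_(j < m) `|u j + v j| ^+ 2 = P + 2 * (\sum_(j < m) u j * v j) + Q.
  rewrite /P /Q mulr_sumr -!big_split /=; apply: eq_bigr => j _.
  rewrite !real_normK ?num_real //; ring.
rewrite e.
have s0 : 0 <= Num.sqrt P + Num.sqrt Q by rewrite addr_ge0 ?sqrtr_ge0.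
rewrite -[X in _ <= X](ger0_norm s0) -sqrtr_sqr ler_sqrt ?sqr_ge0 //.
have := sqr_sqrtr P0; have := sqr_sqrtr Q0. move: hc.
set S := \sum_(j < m) _. set a := Num.sqrt P. set b := Num.sqrt Q.
move=> hc hb ha. rewrite sqrrD -ha -hb. lra.
Qed.
End H.
Lemma dual_le (R : realType) (X : normedModType R) (l : {linear X -> R^o}) :
  dual_norm (l : X -> R) = 1 -> forall x, `|l x| <= `|x|.
Proof.
rewrite /dual_norm => h.
set E := [set _ | _ in _] in h.
have hub : has_ubound E.
  apply: contrapT => nub.
  have : sup E = 0 by apply: sup_out => -[].
  by rewrite h => /eqP; rewrite oner_eq0.
have ub := ub_le_sup hub; rewrite h in ub.
move=> x; have [->|x0] := eqVneq x 0; first by rewrite linear0 normr0.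
have nx : 0 < `|x| by rewrite normr_gt0.
have Ey : E `|l (`|x|^-1 *: x)|.
  exists (`|x|^-1 *: x) => //=.
  by rewrite normrZ normfV normr_id mulVf // gt_eqF.
have := ub _ Ey; rewrite linearZ /= normrZ normfV normr_id.
by rewrite ler_pdivrMl // mulr1.
Qed.

Theorem theorem3p1 (R : realType) (X : completeNormedModType R)
  (Y : set X) (nY : X -> R) (C0 : R) (m : nat)
  (lam : 'I_m -> {linear X -> R^o}) (f : X) (C mu delta : R) (Sigma : set X)
  (fhat : X) :
  is_subspace Y ->
  is_norm_on Y nY ->
  compact (unit_ball_Y Y nY) ->
  (forall g, Y g -> `|g| <= C0 * nY g) ->
  (0 < m)%N ->
  (forall j, continuous (lam j : X -> R)) ->
  (forall j, dual_norm (lam j : X -> R) = 1) ->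
  unit_ball_Y Y nY f ->
  let K := unit_ball_Y Y nY in
  let w := fun j => lam j f in
  cheb_rad (Kw K (fun j => lam j : X -> R) w) != 0%E ->
  2 < C ->
  0 < mu -> 0 < delta -> delta <= mu ^+ 2 ->
  let eps := mu * Num.max C0 (1 + mu) in
  (eps%:E + 2%:E * cheb_rad (Kweps K (fun j => lam j : X -> R) w (2 * eps))
     <= C%:E * cheb_rad (Kw K (fun j => lam j : X -> R) w))%E ->
  (hdist K (Sigma `&` K) < delta%:E)%E ->
  Sigma fhat ->
  (forall g, Sigma g ->
     (loss Y nY (fun j => lam j : X -> R) w mu fhat
        <= loss Y nY (fun j => lam j : X -> R) w mu g)%E) ->
  ((`|f - fhat|)%:E <= C%:E * cheb_rad (Kw K (fun j => lam j : X -> R) w))%E.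
Proof.
move=> hsub hnorm _ hC0 hm _ hdual hf K w _ _ hmu hdelta hdm eps hmain hdist hSf hmin.
have mu1 : 0 < 1 + mu by lra.
have hl : forall j x, `|lam j x| <= `|x| by move=> j; apply: dual_le.
have eps_ge : 1 + mu <= Num.max C0 (1 + mu) by rewrite le_max lexx orbT.
have eps0 : 0 < eps by rewrite /eps mulr_gt0 //; apply: lt_le_trans eps_ge.
have [g [[Sg Kg] fg]] : exists g, (Sigma `&` K) g /\ `|f - g| < delta.
  have hinf : (ereal_inf [set (`|f - b|)%:E | b in Sigma `&` K] < delta%:E)%E.
    apply: le_lt_trans hdist; apply: ereal_sup_ubound; by exists f.
  have [y [b Sb <-] ylt] := ereal_inf_lt hinf.
  by rewrite lte_fin in ylt; exists b.
have vg : vnorm (fun j => lam j g - w j) <= delta.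
  apply: le_trans (ltW fg); apply: vnorm_le => // j.
  by rewrite /w -linearB distrC; apply: hl.
have [Yg ng1] : Y g /\ nY g <= 1 by move: Kg; rewrite /K /unit_ball_Y.
have := hmin g Sg; rewrite /loss /normY (asboolT Yg).
case: (boolP `[< Y fhat >]) => [/asboolP Yfh|_]; last first.
  by rewrite gt0_muley ?lte_fin // addey // leye_eq.
rewrite -!EFinM -!EFinD lee_fin => hle.
set vf := vnorm _ in hle; set vgg := vnorm _ in hle vg.
have vf0 : 0 <= vf by apply: vnorm_ge0.
have nf0 : 0 <= nY fhat by apply: hnorm.1.
have mng : mu * nY g <= mu by rewrite -[leRHS]mulr1 ler_wpM2l // ltW.
have hvf : vf <= mu * (1 + mu) by nra.
have hnf : nY fhat <= 1 + mu.
  have : mu * nY fhat <= mu * (1 + mu) by nra.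
  by rewrite ler_pM2l.
set a := (1 + mu)^-1.
have a0 : 0 < a by rewrite invr_gt0.
have amu : a * (1 + mu) = 1 by rewrite mulVf // gt_eqF.
set f' := a *: fhat.
have Yf' : Y f' by have := hsub.2 a fhat 0 Yfh hsub.1; rewrite addr0.
have Kf' : K f'.
  split => //; rewrite hnorm.2.2.1 // (ger0_norm (ltW a0)) -amu.
  by rewrite ler_pM2l.
have hd : `|fhat - f'| <= eps.
  have -> : fhat - f' = (mu * a) *: fhat.
    rewrite /f' -{1}[fhat]scale1r -scalerBl; congr (_ *: _).
    by rewrite -{1}amu; ring.
  rewrite normrZ (ger0_norm (mulr_ge0 (ltW hmu) (ltW a0))) -mulrA /eps.
  apply: ler_wpM2l; first exact: ltW.
  have hN := hC0 _ Yfh.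
  have [c0|c0] := leP 0 C0.
    rewrite le_max; apply/orP; left.
    have h1 : C0 * nY fhat <= C0 * (1 + mu) by apply: ler_wpM2l.
    have h2 := ler_wpM2l (ltW a0) (le_trans hN h1).
    apply: le_trans h2 _; rewrite mulrCA amu mulr1 //.
  have h1 : C0 * nY fhat <= 0 by rewrite nmulr_rle0.
  have h2 := ler_wpM2l (ltW a0) (le_trans hN h1).
  apply: le_trans eps_ge; apply: le_trans h2 _; rewrite mulr0; exact: ltW.
have vf' : vnorm (fun j => lam j f' - w j) <= 2 * eps.
  have -> : (fun j => lam j f' - w j) =
            (fun j => (lam j f' - lam j fhat) + (lam j fhat - w j)).
    by apply: funext => j; rewrite addrA subrK.
  apply: le_trans (vnorm_tri _ _ _) _; rewrite -[2]/(1+1) mulrDl mul1r.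
  apply: lerD.
    apply: vnorm_le => //; first exact: ltW.
    move=> j; rewrite -linearB; apply: le_trans (hl _ _) _; by rewrite distrC.
  by apply: le_trans hvf _; rewrite /eps ler_pM2l.
apply: le_trans hmain.
set rho := cheb_rad _.
have lb : (((`|f - fhat| - eps) / 2)%:E <= rho)%E.
  apply: le_ereal_inf_tmp => _ [r [z hz] <-]; rewrite lee_fin.
  have h1 : `|f - z| <= r.
    apply: hz; exists w; split; last by split.
    apply: le_trans (_ : 0 <= _); last by rewrite mulr_ge0 // ltW.
    by apply: vnorm_le => // j; rewrite subrr normr0.
  have h2 : `|f' - z| <= r.
    apply: hz; exists (fun j => lam j f'); split => //.
  have : `|f - fhat| <= `|f - z| + `|z - f'| + `|f' - fhat|.
    have e : f - fhat = (f - z) + (z - f') + (f' - fhat) by rewrite !addrA !subrK.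
    rewrite e; apply: le_trans (ler_normD _ _) _; rewrite lerD2r; exact: ler_normD.
  rewrite distrC in hd; rewrite (distrC z). lra.
case: rho lb => [r| |].
  rewrite !lee_fin => lb; lra.
  by move=> _; rewrite gt0_muley ?lte_fin // addey // leey.
by rewrite leeNy_eq.
Qed.
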